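(* (a) Let $1<p<2$. For all $x\in\mathbb{R}^n\setminus\{0\}$ and $y\in\mathbb{R}^n$, $$|x+y|^{p-2}(x+y)\cdot y\ge |x|^{p-2}x\cdot y+\omega_1|y|^2+(p-2)\omega_2(|x|-|x+y|)^2,$$ with $\omega_1=|x+y|^{p-2}$, $\omega_2=\frac{|x+y|^{p-1}}{(2-p)|x+y|+(p-1)|x|}$ if $|x|\le|x+y|$, and $\omega_1=\omega_2=|x|^{p-2}$ if $|x+y|\le|x|$. Moreover $\omega_1|y|^2+(p-2)\omega_2(|x|-|x+y|)^2\ge 0$, with equality only when $y=0$. (b) Let $p\ge2$. There exists $c_3=c_3(p)\in(0,\tfrac12]$ such that for all $x\in\mathbb{R}^n\setminus\{0\}$, $y\in\mathbb{R}^n$, $$|x+y|^{p-2}(x+y)\cdot y\ge |x|^{p-2}x\cdot y+\omega_3|y|^2+(p-2)\omega_4(|x|-|x+y|)^2,$$ where $\omega_3=\omega_4=|x|^{p-2}$ if $|x|\le|x+y|$; $\omega_3=\omega_4=\frac{|x+y|^{p-1}}{|x|}$ if $c_3^{\frac1{p-1}}|x|\le|x+y|\le|x|$; and $\omega_3=c_3|x|^{p-2}$, $\omega_4=\frac{|x+y|^{p-1}}{|x|}$ if $|x+y|\le c_3^{\frac1{p-1}}|x|$.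
   Context: Here $x\cdot y$ is the Euclidean inner product on $\mathbb{R}^n$ and $|\cdot|$ the Euclidean norm. *)

(* Defs.v *)
From HB Require Import structures.
From mathcomp Require Import all_boot all_order all_algebra.
From mathcomp Require Import all_classical all_reals.
From mathcomp Require Import exp.
Set Implicit Arguments. Unset Strict Implicit. Unset Printing Implicit Defensive.
Import Order.TTheory GRing.Theory Num.Theory.
Local Open Scope ring_scope.

Definition dotv {R : realType} {n : nat} (u v : 'rV[R]_n) : R :=
  \sum_(i < n) u 0 i * v 0 i.

Definition enorm {R : realType} {n : nat} (u : 'rV[R]_n) : R :=
  Num.sqrt (dotv u u).

(* Main.v *)
Require Import Defs.
From HB Require Import structures.
From mathcomp Require Import all_boot all_order all_algebra.
From mathcomp Require Import all_classical all_reals.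
From mathcomp Require Import exp.
From mathcomp Require Import ring lra.
Import Order.TTheory GRing.Theory Num.Theory.
Local Open Scope ring_scope.

Section S.
Variable R : realType.

Lemma young_concave (q r : R) : 0 < q -> q < 1 -> 0 <= r -> r `^ q <= 1 + q * (r - 1).
Proof.
move=> q0 q1 r0.
have q10 : 0 < 1 - q by rewrite subr_gt0.
have := @conjugate_powR R (r `^ q) 1 q^-1 (1 - q)^-1 (powR_ge0 _ _) ler01.
rewrite !invr_gt0 q0 q10 !invrK => /(_ isT isT).
rewrite (addrC q) subrK => /(_ erefl).
rewrite -powRrM mulfV ?gt_eqF // powRr1 // powR1 mulr1.
move=> h; apply: (le_trans h).
lra.
Qed.

Lemma young_convex (q r : R) : 1 <= q -> 0 <= r -> 1 + q * (r - 1) <= r `^ q.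
Proof.
move=> q1 r0.
have [->|qn1] := eqVneq q 1; first by rewrite powRr1 //; lra.
have q1' : 1 < q by rewrite lt_neqAle eq_sym qn1.
have q0 : 0 < q by lra.
have qne : q != 0 by rewrite gt_eqF.
have qm0 : 0 < q - 1 by rewrite subr_gt0.
have qmne : q - 1 != 0 by rewrite gt_eqF.
have := @conjugate_powR R r 1 q (q / (q - 1)) r0 ler01 q0.
rewrite divr_gt0 // => /(_ isT).
rewrite invf_div.
have e : q^-1 + (q - 1) / q = 1 by field.
move=> /(_ e); rewrite powR1 mulr1 => h.
have h2 : q * r <= q * (r `^ q / q + 1 * ((q - 1) / q)) by rewrite ler_pM2l.
have e2 : q * (r `^ q / q + 1 * ((q - 1) / q)) = r `^ q + (q - 1) by field.
rewrite e2 in h2; lra.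
Qed.

Lemma tangent_concave (q u v : R) : 0 < q -> q < 1 -> 0 < v -> 0 <= u ->
  u `^ q <= v `^ (q - 1) * (v + q * (u - v)).
Proof.
move=> q0 q1 v0 u0.
have vne : v != 0 by rewrite gt_eqF.
have uv : u = v * (u / v) by field.
have uv0 : 0 <= u / v by rewrite divr_ge0 // ltW.
rewrite {1}uv powRM ?(ltW v0) // -(@mulr_powRB1 R v q (ltW v0) q0).
have h := @young_concave q (u / v) q0 q1 uv0.
have V0 : 0 <= v * v `^ (q - 1) by rewrite mulr_ge0 ?powR_ge0 ?(ltW v0).
apply: (le_trans (ler_wpM2l V0 h)).
rewrite le_eqVlt; apply/orP; left; apply/eqP; by field.
Qed.

Lemma tangent_convex (q u v : R) : 1 <= q -> 0 < v -> 0 <= u ->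
  v `^ (q - 1) * (v + q * (u - v)) <= u `^ q.
Proof.
move=> q1 v0 u0.
have q0 : 0 < q by lra.
have vne : v != 0 by rewrite gt_eqF.
have uv : u = v * (u / v) by field.
have uv0 : 0 <= u / v by rewrite divr_ge0 // ltW.
rewrite [in X in _ <= X]uv powRM ?(ltW v0) // -(@mulr_powRB1 R v q (ltW v0) q0).
have h := @young_convex q (u / v) q1 uv0.
have V0 : 0 <= v * v `^ (q - 1) by rewrite mulr_ge0 ?powR_ge0 ?(ltW v0).
apply: le_trans (ler_wpM2l V0 h).
rewrite le_eqVlt; apply/orP; left; apply/eqP; by field.
Qed.

Lemma dotvDl {n} (x y z : 'rV[R]_n) : dotv (x + y) z = dotv x z + dotv y z.
Proof. by rewrite /dotv -big_split; apply: eq_bigr => i _; rewrite mxE mulrDl. Qed.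

Lemma dotvC {n} (x y : 'rV[R]_n) : dotv x y = dotv y x.
Proof. by rewrite /dotv; apply: eq_bigr => i _; rewrite mulrC. Qed.

Lemma dotvDr {n} (x y z : 'rV[R]_n) : dotv z (x + y) = dotv z x + dotv z y.
Proof. by rewrite dotvC dotvDl !(dotvC z). Qed.

Lemma dotv_ge0 {n} (x : 'rV[R]_n) : 0 <= dotv x x.
Proof. by rewrite /dotv; apply: sumr_ge0 => i _; rewrite -expr2 sqr_ge0. Qed.

Lemma dotv0r {n} (x : 'rV[R]_n) : dotv x 0 = 0.
Proof. by rewrite /dotv big1 // => i _; rewrite mxE mulr0. Qed.

Lemma dotv_eq0 {n} (x : 'rV[R]_n) : dotv x x = 0 -> x = 0.
Proof.
move=> /eqP; rewrite /dotv psumr_eq0 => [/allP h|i _]; last by rewrite -expr2 sqr_ge0.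
apply/rowP => i; rewrite mxE.
have := h i (mem_index_enum _); rewrite /= mulf_eq0 orbb.
by move/eqP.
Qed.

Lemma dotv_quad {n} (x z : 'rV[R]_n) r s :
  0 <= r ^+ 2 * dotv x x + 2 * r * s * dotv x z + s ^+ 2 * dotv z z.
Proof.
have -> : r ^+ 2 * dotv x x + 2 * r * s * dotv x z + s ^+ 2 * dotv z z
  = \sum_(i < n) (r * x 0 i + s * z 0 i) ^+ 2.
  rewrite /dotv !mulr_sumr -!big_split; apply: eq_bigr => i _ /=; ring.
by apply: sumr_ge0 => i _; rewrite sqr_ge0.
Qed.

Lemma enorm_sq {n} (x : 'rV[R]_n) : enorm x ^+ 2 = dotv x x.
Proof. by rewrite /enorm sqr_sqrtr // dotv_ge0. Qed.

Lemma enorm_ge0 {n} (x : 'rV[R]_n) : 0 <= enorm x.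
Proof. by rewrite /enorm sqrtr_ge0. Qed.

Lemma enorm_gt0 {n} {x : 'rV[R]_n} : x != 0 -> 0 < enorm x.
Proof.
move=> x0; rewrite lt_neqAle enorm_ge0 andbT; apply/eqP => h.
have : dotv x x = 0 by rewrite -enorm_sq -h expr0n.
by move/dotv_eq0 => e; rewrite e eqxx in x0.
Qed.

Lemma key_u0 {n} (x y : 'rV[R]_n) :
  let a := enorm x in let b := enorm (x + y) in
  let u := dotv x x + dotv x y in
  [/\ dotv (x + y) y = b ^+ 2 - u, dotv x y = u - a ^+ 2,
      enorm y ^+ 2 = a ^+ 2 + b ^+ 2 - 2 * u, u <= a * b &
      (b = 0 -> u = a * b)].
Proof.
move=> a b u.
have ha : a ^+ 2 = dotv x x by rewrite enorm_sq.
have hb : b ^+ 2 = dotv x x + 2 * dotv x y + dotv y y.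
  rewrite enorm_sq !dotvDl !dotvDr (dotvC y x); ring.
have hy := enorm_sq y.
have hyz : dotv (x + y) y = dotv x y + dotv y y by rewrite dotvDl.
have hu : dotv x (x + y) = u by rewrite dotvDr.
have b0u : b = 0 -> u = a * b.
  move=> b0; have : dotv (x + y) (x + y) = 0 by rewrite -enorm_sq -/b b0 expr0n.
  by move/dotv_eq0 => e; rewrite -hu e dotv0r b0 mulr0.
split => //; try (rewrite ?hyz ?hy ?hb ?ha /u; ring).
have a0 := enorm_ge0 x; have b0 := enorm_ge0 (x + y).
have [a0'|] := eqVneq a 0.
  have : dotv x x = 0 by rewrite -ha a0' expr0n.
  by move/dotv_eq0 => e; rewrite /u e dotv0r (dotvC 0) dotv0r a0' mul0r addr0.
have [b0'|] := eqVneq b 0; first by rewrite b0u.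
move=> bn an.
have ab0 : 0 < a * b by rewrite mulr_gt0 // lt_neqAle eq_sym ?an ?bn.
have q := dotv_quad x (x + y) b (- a).
rewrite hu -ha -enorm_sq -/b in q.
nra.
Qed.

Lemma key_u {n} (x y : 'rV[R]_n) :
  [/\ dotv (x + y) y = enorm (x + y) ^+ 2 - (dotv x x + dotv x y),
      dotv x y = (dotv x x + dotv x y) - enorm x ^+ 2,
      enorm y ^+ 2 = enorm x ^+ 2 + enorm (x + y) ^+ 2 - 2 * (dotv x x + dotv x y),
      (dotv x x + dotv x y) <= enorm x * enorm (x + y) &
      (enorm (x + y) = 0 -> (dotv x x + dotv x y) = enorm x * enorm (x + y))].
Proof. exact: key_u0. Qed.

Lemma core (a b u A B w1 k : R) : u <= a * b -> (2 * w1 - A - B <= 0 \/ u = a * b) ->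
  0 <= B * (b ^+ 2 - a * b) - A * (a * b - a ^+ 2) - w1 * (a - b) ^+ 2 - k * (a - b) ^+ 2 ->
  A * (u - a ^+ 2) + w1 * (a ^+ 2 + b ^+ 2 - 2 * u) + k * (a - b) ^+ 2 <= B * (b ^+ 2 - u).
Proof.
move=> hu [hc|->] hf; last by lra.
have h : 0 <= (2 * w1 - A - B) * (u - a * b) by rewrite mulr_le0 // subr_le0.
lra.
Qed.

Lemma powR_pred (x p : R) : 0 <= x -> 1 < p -> x `^ (p - 1) = x * x `^ (p - 2).
Proof.
move=> x0 p1; rewrite -mulr_powRB1 ?subr_gt0 //.
by have -> : p - 1 - 1 = p - 2 by ring.
Qed.

Lemma powR_decr (r a b : R) : r <= 0 -> 0 < a -> a <= b -> b `^ r <= a `^ r.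
Proof.
move=> r0 a0 ab.
have b0 : 0 < b by apply: lt_le_trans ab.
have e : forall x, x `^ r = (x `^ (- r))^-1 by move=> x; rewrite -powRN opprK.
rewrite !e lef_pV2 ?posrE ?powR_gt0 //.
apply: ge0_ler_powR; rewrite ?nnegrE ?oppr_ge0 //; lra.
Qed.


Theorem partA :
  (forall (p : R), 1 < p -> p < 2 ->
   forall (n : nat) (x y : 'rV[R]_n), x != 0 ->
   let a := enorm x in
   let b := enorm (x + y) in
   let lhs := b `^ (p - 2) * dotv (x + y) y in
   let base := a `^ (p - 2) * dotv x y in
   (a <= b ->
      let w1 := b `^ (p - 2) in
      let w2 := b `^ (p - 1) / ((2 - p) * b + (p - 1) * a) in
      lhs >= base + w1 * enorm y ^+ 2 + (p - 2) * w2 * (a - b) ^+ 2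
      /\ 0 <= w1 * enorm y ^+ 2 + (p - 2) * w2 * (a - b) ^+ 2
      /\ (w1 * enorm y ^+ 2 + (p - 2) * w2 * (a - b) ^+ 2 = 0 -> y = 0)) /\
   (b <= a ->
      let w1 := a `^ (p - 2) in
      let w2 := a `^ (p - 2) in
      lhs >= base + w1 * enorm y ^+ 2 + (p - 2) * w2 * (a - b) ^+ 2
      /\ 0 <= w1 * enorm y ^+ 2 + (p - 2) * w2 * (a - b) ^+ 2
      /\ (w1 * enorm y ^+ 2 + (p - 2) * w2 * (a - b) ^+ 2 = 0 -> y = 0))).
Proof.
move=> p p1 p2 n x y x0 a b lhs base.
have [hyz hxy hy hu hb0] := key_u x y.
rewrite -/a -/b in hyz hxy hy hu hb0.
set u := dotv x x + dotv x y in hyz hxy hy hu hb0.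
have a0 : 0 < a := enorm_gt0 x0.
have b0 : 0 <= b := enorm_ge0 _.
set A := a `^ (p - 2). set B := b `^ (p - 2).
have A0 : 0 < A by rewrite powR_gt0.
have B0 : 0 <= B by rewrite powR_ge0.
have haq : a `^ (p - 1) = a * A by rewrite powR_pred // ltW.
have hbq : b `^ (p - 1) = b * B by rewrite powR_pred.
have yeq : enorm y ^+ 2 = 0 -> y = 0 by rewrite enorm_sq; apply: dotv_eq0.
have Yd : (a - b) ^+ 2 <= enorm y ^+ 2 by rewrite hy; lra.
have e12 : p - 1 - 1 = p - 2 by ring.
split.
- move=> hab w1 w2; rewrite /lhs /base /w1 /w2 hyz hxy -/B.
  have b0' : 0 < b by apply: lt_le_trans hab.
  have Bp : 0 < B by rewrite powR_gt0.
  set D := (2 - p) * b + (p - 1) * a.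
  have D1 : 0 < (2 - p) * b by rewrite mulr_gt0 // subr_gt0.
  have D2 : 0 < (p - 1) * a by rewrite mulr_gt0 // subr_gt0.
  have D0 : 0 < D by rewrite /D; lra.
  have D3 : 0 <= (p - 1) * (b - a) by rewrite mulr_ge0 // subr_ge0 // ltW.
  have Db : D <= b by rewrite /D; lra.
  rewrite hbq; set w := b * B / D.
  have hwD : w * D = b * B by rewrite /w divfK // gt_eqF.
  have hBw : B <= w.
    by rewrite /w ler_pdivlMr // [B * D]mulrC ler_wpM2r.
  have hBA : B <= A by apply: powR_decr => //; lra.
  have htan := @tangent_concave (p - 1) a b _ _ b0' (ltW a0).
  rewrite haq e12 -/B in htan.
  have {htan} htan := htan (ltac:(lra)) (ltac:(lra)).
  have P1 : 0 <= (b - a) * (B * (b + (p - 1) * (a - b)) - a * A).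
    by rewrite mulr_ge0 // subr_ge0.
  have P2 : 0 <= (b - a) * (b - a) * (2 - p) * (w - B).
    by rewrite !mulr_ge0 // subr_ge0 // ltW.
  have hf : 0 <= B * (b ^+ 2 - a * b) - A * (a * b - a ^+ 2) - B * (a - b) ^+ 2
     - (p - 2) * w * (a - b) ^+ 2 by lra.
  split; first by rewrite hy -/A; apply: core => //; left; lra.
  have GD : (B - (2 - p) * w) * D = B * ((p - 1) * a).
    by rewrite mulrBl -mulrA hwD /D; ring.
  have G0 : 0 < B - (2 - p) * w.
    by rewrite -(pmulr_lgt0 _ D0) GD mulr_gt0.
  have Q1 : 0 <= B * (enorm y ^+ 2 - (a - b) ^+ 2) by rewrite mulr_ge0 // subr_ge0.
  have Q2 : 0 <= (B - (2 - p) * w) * (a - b) ^+ 2 by apply: mulr_ge0; [exact: ltW | exact: sqr_ge0].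
  split; first lra.
  move=> E0.
  have h1 : (B - (2 - p) * w) * (a - b) ^+ 2 = 0 by lra.
  move/eqP: h1; rewrite mulf_eq0 gt_eqF //= => /eqP h1.
  have h2 : B * enorm y ^+ 2 = 0 by rewrite h1 mulr0 addr0 in E0.
  by move/eqP: h2; rewrite mulf_eq0 gt_eqF //= => /eqP /yeq.
- move=> hba w1 w2; rewrite /lhs /base /w1 /w2 hyz hxy -/A -/B.
  have htan := @tangent_concave (p - 1) b a _ _ a0 b0.
  rewrite hbq e12 -/A in htan.
  have {htan} htan := htan (ltac:(lra)) (ltac:(lra)).
  have P1 : 0 <= (a - b) * (A * (a + (p - 1) * (b - a)) - b * B).
    by rewrite mulr_ge0 // subr_ge0.
  have hf : 0 <= B * (b ^+ 2 - a * b) - A * (a * b - a ^+ 2) - A * (a - b) ^+ 2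
     - (p - 2) * A * (a - b) ^+ 2 by lra.
  have hc : 2 * A - A - B <= 0 \/ u = a * b.
    have [bz|bnz] := eqVneq b 0; first by right; apply: hb0.
    left; have b0' : 0 < b by rewrite lt_neqAle eq_sym bnz.
    have : A <= B by apply: powR_decr => //; lra.
    lra.
  split; first by rewrite hy; apply: core.
  have Q1 : 0 <= A * (enorm y ^+ 2 - (a - b) ^+ 2) by apply: mulr_ge0; [exact: ltW | rewrite subr_ge0].
  have pA : 0 < (p - 1) * A by rewrite mulr_gt0 // subr_gt0.
  have Q2 : 0 <= (p - 1) * A * (a - b) ^+ 2 by apply: mulr_ge0; [exact: ltW | exact: sqr_ge0].
  split; first lra.
  move=> E0.
  have h1 : (p - 1) * A * (a - b) ^+ 2 = 0 by lra.
  move/eqP: h1; rewrite mulf_eq0 gt_eqF //= => /eqP h1.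
  have h2 : A * enorm y ^+ 2 = 0 by rewrite h1 mulr0 addr0 in E0.
  by move/eqP: h2; rewrite mulf_eq0 gt_eqF //= => /eqP /yeq.
Qed.

Theorem partB :
  (forall (p : R), 2 <= p ->
   exists c3 : R, 0 < c3 /\ c3 <= 1 / 2 /\
   forall (n : nat) (x y : 'rV[R]_n), x != 0 ->
   let a := enorm x in
   let b := enorm (x + y) in
   let lhs := b `^ (p - 2) * dotv (x + y) y in
   let base := a `^ (p - 2) * dotv x y in
   let t := c3 `^ (1 / (p - 1)) in
   (a <= b ->
      let w3 := a `^ (p - 2) in
      let w4 := a `^ (p - 2) in
      lhs >= base + w3 * enorm y ^+ 2 + (p - 2) * w4 * (a - b) ^+ 2) /\
   (t * a <= b -> b <= a ->
      let w3 := b `^ (p - 1) / a in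
      let w4 := b `^ (p - 1) / a in
      lhs >= base + w3 * enorm y ^+ 2 + (p - 2) * w4 * (a - b) ^+ 2) /\
   (b <= t * a ->
      let w3 := c3 * a `^ (p - 2) in
      let w4 := b `^ (p - 1) / a in
      lhs >= base + w3 * enorm y ^+ 2 + (p - 2) * w4 * (a - b) ^+ 2)).
Proof.
move=> p p2.
have p0 : 0 < p by lra.
have p1 : 1 < p by lra.
have pne : p != 0 by rewrite gt_eqF.
have pmne : p - 1 != 0 by rewrite gt_eqF // subr_gt0.
exists (1 / (2 * p)); set c3 := 1 / (2 * p).
have c30 : 0 < c3 by rewrite /c3 divr_gt0 // mulr_gt0.
have hpc : p * c3 = 1 / 2 by rewrite /c3; field.
have hpc2 : 0 <= (p - 2) * c3 by rewrite mulr_ge0 ?subr_ge0 // ltW.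
have c312 : c3 <= 1 / 2 by lra.
split => //; split => //.
move=> n x y x0 a b lhs base t.
have [hyz hxy hy hu hb0] := key_u x y.
rewrite -/a -/b in hyz hxy hy hu hb0.
set u := dotv x x + dotv x y in hyz hxy hy hu hb0.
have a0 : 0 < a := enorm_gt0 x0.
have b0 : 0 <= b := enorm_ge0 _.
set A := a `^ (p - 2). set B := b `^ (p - 2).
have A0 : 0 < A by rewrite powR_gt0.
have B0 : 0 <= B by rewrite powR_ge0.
have haq : a `^ (p - 1) = a * A by rewrite powR_pred // ltW.
have hbq : b `^ (p - 1) = b * B by rewrite powR_pred.
have e12 : p - 1 - 1 = p - 2 by ring.
have t0 : 0 < t by rewrite powR_gt0.
have t1 : t <= 1.
  have : t <= 1 `^ (1 / (p - 1)).
    apply: ge0_ler_powR; rewrite ?nnegrE ?ltW //; try lra.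
    by rewrite divr_gt0 // subr_gt0.
  by move=> h; apply: (le_trans h); rewrite /powR oner_eq0 ln1 mulr0 expR0.
have htq : t `^ (p - 1) = c3.
  rewrite /t -powRrM.
  have -> : 1 / (p - 1) * (p - 1) = 1 by field.
  by rewrite powRr1 // ltW.
have aq : a ^+ 2 = a * a by rewrite expr2.
split; last split.
- move=> hab; cbv zeta; rewrite /lhs /base hyz hxy -/A -/B hy.
  have b0' : 0 < b by apply: lt_le_trans hab.
  have htan := @tangent_convex (p - 1) b a _ a0 b0.
  rewrite hbq e12 -/A in htan.
  have {htan} htan := htan (ltac:(lra)).
  have P1 : 0 <= (b - a) * (b * B - A * (a + (p - 1) * (b - a))).
    by rewrite mulr_ge0 // subr_ge0.
  have hAB : A <= B.
    by apply: ge0_ler_powR; rewrite ?nnegrE ?subr_ge0 // ltW.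
  apply: core => //; first by left; lra.
  lra.
- move=> htb hba; cbv zeta; rewrite /lhs /base hyz hxy -/A -/B hy hbq.
  have ta0 : 0 < t * a by rewrite mulr_gt0.
  have b0' : 0 < b by apply: lt_le_trans htb.
  set w := b * B / a.
  have hwa : w * a = b * B by rewrite /w divfK // gt_eqF.
  have hwB : w <= B by rewrite /w ler_pdivrMr // [B * a]mulrC ler_wpM2r.
  have hbqa : b * B <= a * A.
    rewrite -hbq -haq; apply: ge0_ler_powR => //; rewrite ?nnegrE //; lra.
  have hwA : w <= A.
    by rewrite /w ler_pdivrMr // [A * a]mulrC.
  have htan := @tangent_convex (p - 1) a b _ b0' (ltW a0).
  rewrite haq e12 -/B in htan.
  have {htan} htan := htan (ltac:(lra)).
  have P1 : 0 <= (a - b) * (a * A - B * (b + (p - 1) * (a - b))).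
    by rewrite mulr_ge0 // subr_ge0.
  have P2 : 0 <= (a - b) * (a - b) * (p - 1) * (B - w).
    by rewrite !mulr_ge0 // subr_ge0 // ltW.
  apply: core => //; first by left; lra.
  lra.
- move=> hbt; cbv zeta; rewrite /lhs /base hyz hxy -/A -/B hy hbq.
  have ta : t * a <= a by rewrite ler_piMl // ltW.
  have hba : b <= a by apply: le_trans ta.
  set w := b * B / a.
  have w0 : 0 <= w by rewrite /w divr_ge0 // ?mulr_ge0 // ltW.
  have hwa : w * a = b * B by rewrite /w divfK // gt_eqF.
  have hbc : b * B <= c3 * (a * A).
    rewrite -hbq -haq -htq -powRM; [|exact: ltW|exact: ltW].
    apply: ge0_ler_powR => //; rewrite ?nnegrE //; try lra.
  set d := a - b.
  have d0 : 0 <= d by rewrite /d subr_ge0.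
  have da : d <= a by rewrite /d; lra.
  have F0 : w * d <= b * B by rewrite -hwa ler_wpM2l.
  have F1 : c3 * (A * d) <= c3 * (a * A).
    apply: (ler_wpM2l (ltW c30)); rewrite [A * d]mulrC; exact: (ler_wpM2r (ltW A0) da).
  have F2 : (p - 2) * (w * d) <= (p - 2) * (b * B) by rewrite ler_wpM2l // subr_ge0.
  have F3 : (p - 2) * (b * B) <= (p - 2) * (c3 * (a * A)) by rewrite ler_wpM2l // subr_ge0.
  have F4 : p * c3 * (a * A) = (a * A) / 2 by rewrite hpc; field.
  have aA0 : 0 <= a * A by rewrite mulr_ge0 ?ltW.
  have inner : 0 <= a * A - b * B - c3 * A * d - (p - 2) * w * d by lra.
  have P : 0 <= d * (a * A - b * B - c3 * A * d - (p - 2) * w * d) by rewrite mulr_ge0.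
  have cA : 0 <= (1 / 2 - c3) * A by apply: mulr_ge0; [rewrite subr_ge0 | exact: ltW].
  apply: core => //; first by left; lra.
  rewrite /d in P; lra.
Qed.

End S.

Theorem mainTheorem4 (R : realType) :
  (* (a) 1 < p < 2 *)
  (forall (p : R), 1 < p -> p < 2 ->
   forall (n : nat) (x y : 'rV[R]_n), x != 0 ->
   let a := enorm x in
   let b := enorm (x + y) in
   let lhs := b `^ (p - 2) * dotv (x + y) y in
   let base := a `^ (p - 2) * dotv x y in
   (a <= b ->
      let w1 := b `^ (p - 2) in
      let w2 := b `^ (p - 1) / ((2 - p) * b + (p - 1) * a) in
      lhs >= base + w1 * enorm y ^+ 2 + (p - 2) * w2 * (a - b) ^+ 2
      /\ 0 <= w1 * enorm y ^+ 2 + (p - 2) * w2 * (a - b) ^+ 2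
      /\ (w1 * enorm y ^+ 2 + (p - 2) * w2 * (a - b) ^+ 2 = 0 -> y = 0)) /\
   (b <= a ->
      let w1 := a `^ (p - 2) in
      let w2 := a `^ (p - 2) in
      lhs >= base + w1 * enorm y ^+ 2 + (p - 2) * w2 * (a - b) ^+ 2
      /\ 0 <= w1 * enorm y ^+ 2 + (p - 2) * w2 * (a - b) ^+ 2
      /\ (w1 * enorm y ^+ 2 + (p - 2) * w2 * (a - b) ^+ 2 = 0 -> y = 0)))
  /\
  (* (b) p >= 2 *)
  (forall (p : R), 2 <= p ->
   exists c3 : R, 0 < c3 /\ c3 <= 1 / 2 /\
   forall (n : nat) (x y : 'rV[R]_n), x != 0 ->
   let a := enorm x in
   let b := enorm (x + y) in
   let lhs := b `^ (p - 2) * dotv (x + y) y in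
   let base := a `^ (p - 2) * dotv x y in
   let t := c3 `^ (1 / (p - 1)) in
   (a <= b ->
      let w3 := a `^ (p - 2) in
      let w4 := a `^ (p - 2) in
      lhs >= base + w3 * enorm y ^+ 2 + (p - 2) * w4 * (a - b) ^+ 2) /\
   (t * a <= b -> b <= a ->
      let w3 := b `^ (p - 1) / a in
      let w4 := b `^ (p - 1) / a in
      lhs >= base + w3 * enorm y ^+ 2 + (p - 2) * w4 * (a - b) ^+ 2) /\
   (b <= t * a ->
      let w3 := c3 * a `^ (p - 2) in
      let w4 := b `^ (p - 1) / a in
      lhs >= base + w3 * enorm y ^+ 2 + (p - 2) * w4 * (a - b) ^+ 2)).
Proof.
split; [exact: (partA R) | exact: (partB R)].
Qed.
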